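(* For $i\in\{1,2\}$, let $L_i$ be a planar semimodular lattice with a fixed planar diagram and let $L_i'$ be the full slimming sublattice of $L_i$ obtained from that diagram. Then: (i) $L_1$ is glued sum indecomposable if and only if $L_1'$ is glued sum indecomposable. (ii) If $\varphi\colon L_1\to L_2$ is a lattice isomorphism, then there is an automorphism $\pi$ of $L_1$ such that $\pi(x)=x$ for every reducible element $x\in L_1$, and the restriction of $\varphi\circ\pi$ to $L_1'$ is a $\nu$-preserving isomorphism from $L_1'$ onto $L_2'$, i.e., $\nu_{L_1,L_1'}=\nu_{L_2,L_2'}\circ(\varphi\circ\pi)|_{L_1'}$. (iii) Any two full slimming sublattices of a planar semimodular lattice (obtained from possibly different planar diagrams) are isomorphic.
   Context: All lattices are finite. A lattice is glued sum indecomposable if it is not a chain and every $x\in L\setminus\{0,1\}$ is incomparable with some element. An element is reducible if it is join-reducible or meet-reducible, i.e., not doubly irreducible. Given a planar diagram of a planar semimodular lattice $L$, an eye is a doubly irreducible element lying in the interior of an interval of length $2$ (strictly inside the region bounded by the leftmost and rightmost maximal chains of that interval). A full slimming sublattice $L'$ of $L$ is obtained by omitting eyes (with their edges) one by one as long as possible; $L'$ is a slim semimodular sublattice containing all reducible elements of $L$, and in it every element has at most two covers, so each $4$-cell (covering square of the diagram) of $L'$ is determined by its bottom. The numerical companion map $\nu_{L,L'}\colon L'\to\{0,1,2,\dots\}$ sends $x$ to $n$ if $x$ is the bottom of a $4$-cell of $L'$ into whose interior $n$ eyes of $L$ were placed, and to $0$ otherwise. An isomorphism $\varphi\colon L_1'\to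 L_2'$ is $\nu$-preserving if $\nu_{L_1,L_1'}=\nu_{L_2,L_2'}\circ\varphi$. *)

(* Defs.v *)
From HB Require Import structures.
From mathcomp Require Import all_boot all_order.
Set Implicit Arguments. Unset Strict Implicit. Unset Printing Implicit Defensive.
Import Order.TTheory.
Local Open Scope order_scope.

Section PlanarSemimodular.
Variables (d : Order.disp_t) (L : finTBLatticeType d).
Implicit Types (S : {set L}) (x y z e : L).

Definition covS S x y : bool :=
  [&& x \in S, y \in S, x < y & [forall z, ~~ [&& z \in S, x < z & z < y]]].

Definition covL x y : bool := covS [set: L] x y.

Definition semimodular : Prop :=
  forall x y z, covL x y -> (x `|` z == y `|` z) || covL (x `|` z) (y `|` z).

Definition linear_order (r : rel L) : Prop :=
  [/\ reflexive r, antisymmetric r, transitive r & total r].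

(* A planar diagram of L, up to similarity, is encoded by a 2-realizer
   (l1, l2): two linear orders whose intersection is the order of L.
   For incomparable x, y: "x is to the left of y" iff l1 x y (iff l2 y x).
   L is planar iff such a realizer exists (Kelly--Rival, Baker--Fishburn--Roberts). *)
Definition planar_diagram (l1 l2 : rel L) : Prop :=
  [/\ linear_order l1, linear_order l2 & forall x y, (x <= y) = l1 x y && l2 x y].

Definition leftof (l1 : rel L) x y : bool := (x != y) && l1 x y.

Definition interval_len2 S (a b : L) : bool :=
  [&& a \in S, b \in S, a < b,
      [exists z, [&& z \in S, a < z & z < b]] &
      [forall z, [&& z \in S, a < z & z < b] ==> covS S a z && covS S z b]].

Definition dbl_irr S x : bool :=
  (#|[set y | covS S y x]| <= 1)%N && (#|[set y | covS S x y]| <= 1)%N.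

Definition reducible x : bool := ~~ dbl_irr [set: L] x.

(* e is an eye of (the diagram l1 restricted to) S: doubly irreducible and
   strictly inside the region bounded by the leftmost and rightmost maximal
   chains of an interval [a,b] of length 2, i.e. e is a middle element of
   [a,b] and neither the leftmost nor the rightmost one. *)
Definition eye (l1 : rel L) S e : bool :=
  [&& e \in S, dbl_irr S e &
   [exists a, exists b, exists c1, exists c2,
     [&& interval_len2 S a b, a < e, e < b,
         c1 \in S, a < c1, c1 < b, c2 \in S, a < c2, c2 < b,
         leftof l1 c1 e & leftof l1 e c2]]].

Inductive slimming_reach (l1 : rel L) : {set L} -> Prop :=
| sr_full : slimming_reach l1 [set: L]
| sr_step S e : slimming_reach l1 S -> eye l1 S e -> slimming_reach l1 (S :\ e).

Definition full_slimming (l1 : rel L) S : Prop :=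
  slimming_reach l1 S /\ forall e, ~~ eye l1 S e.

Definition cell4 (l1 : rel L) S x c1 c2 t : bool :=
  [&& leftof l1 c1 c2, covS S x c1, covS S x c2, covS S c1 t & covS S c2 t].

(* numerical companion map nu_{L,S}: number of (omitted) eyes of L placed
   into the interior of the 4-cell of S with bottom x (0 if no such cell) *)
Definition nu (l1 : rel L) S x : nat :=
  #|[set e | (e \notin S) &&
       [exists c1, exists c2, exists t,
         [&& cell4 l1 S x c1 c2 t, x < e, e < t, leftof l1 c1 e & leftof l1 e c2]]]|.

Definition chainS S : bool := [forall x, forall y, (x \in S) && (y \in S) ==> (x >=< y)].

Definition gs_indecomposable S : Prop :=
  ~~ chainS S /\
  forall x, x \in S -> x != \bot -> x != \top -> exists2 y, y \in S & ~~ (x >=< y).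

End PlanarSemimodular.

Definition lattice_iso d1 d2 (L1 : finTBLatticeType d1) (L2 : finTBLatticeType d2)
  (f : L1 -> L2) : Prop :=
  [/\ bijective f, {morph f : x y / x `|` y} & {morph f : x y / x `&` y}].

(* Main.v *)
Require Import Defs.
From HB Require Import structures.
From mathcomp Require Import all_boot all_order fingroup perm.
Set Implicit Arguments. Unset Strict Implicit. Unset Printing Implicit Defensive.
Import Order.TTheory.
Local Open Scope order_scope.

Section Basic.
Variables (d : Order.disp_t) (L : finTBLatticeType d).
Implicit Types (S : {set L}) (x y z a b c e : L).

Lemma covLP x y : reflect (x < y /\ forall z, x < z -> z < y -> False) (covL x y).
Proof.
rewrite /covL /covS !in_setT /=; apply: (iffP andP) => [[xy /forallP H]|[xy H]].
  split=> // z xz zy; by move: (H z); rewrite in_setT xz zy.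
split=> //; apply/forallP => z; rewrite in_setT /=; apply/negP => /andP[xz zy].
exact: H xz zy.
Qed.

Lemma cov_lt x y : covL x y -> x < y.
Proof. by case/covLP. Qed.

Lemma cov_le x y : covL x y -> x <= y.
Proof. by move/cov_lt/ltW. Qed.

Lemma cov_nomid x y z : covL x y -> x < z -> z < y -> False.
Proof. by case/covLP=> _; apply. Qed.

Lemma covI x y : x < y -> (forall z, x < z -> z < y -> False) -> covL x y.
Proof. by move=> xy H; apply/covLP. Qed.

Lemma covS_covL S x y : x \in S -> y \in S -> covL x y -> covS S x y.
Proof.
move=> xS yS /covLP[xy H]; rewrite /covS xS yS xy /=; apply/forallP => z.
by apply/negP => /and3P[_ xz zy]; apply: H xz zy.
Qed.

Lemma covS_lt S x y : covS S x y -> x < y.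
Proof. by case/and4P. Qed.

Lemma covS_mem S x y : covS S x y -> (x \in S) /\ (y \in S).
Proof. by case/and4P. Qed.

Lemma covS_nomid S x y z : covS S x y -> z \in S -> x < z -> z < y -> False.
Proof.
case/and4P => _ _ _ /forallP H zS xz zy; by move: (H z); rewrite zS xz zy.
Qed.

Lemma up_cover x y : x < y -> exists c, covL x c /\ c <= y.
Proof.
move: {2}#|[set w | w < y]| (leqnn #|[set w | w < y]|) => n.
elim: n y => [|n IH] y Hn xy.
  by move: Hn; rewrite leqn0 cards_eq0 => /eqP E; move: (in_set0 x); rewrite -E inE xy.
case: (boolP (covL x y)) => [H|]; first by exists y.
move/covLP => H.
have [z xz zy] : exists2 z, x < z & z < y.
  case: (pickP [pred z | (x < z) && (z < y)]) => [z /andP[? ?]|H']; first by exists z.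
  by case: H; split=> // z xz zy; move: (H' z); rewrite /= xz zy.
have [|c [xc cz]] := IH z _ xz.
  rewrite -ltnS; apply: leq_trans Hn; apply: proper_card; apply/properP; split.
    by apply/subsetP => w; rewrite !inE => /lt_trans; apply.
  by exists z; rewrite !inE ?zy ?ltxx.
by exists c; split=> //; apply: le_trans cz (ltW zy).
Qed.

Lemma down_cover x y : x < y -> exists c, covL c y /\ x <= c.
Proof.
move: {2}#|[set w | x < w]| (leqnn #|[set w | x < w]|) => n.
elim: n x => [|n IH] x Hn xy.
  by move: Hn; rewrite leqn0 cards_eq0 => /eqP E; move: (in_set0 y); rewrite -E inE xy.
case: (boolP (covL x y)) => [H|]; first by exists x.
move/covLP => H.
have [z xz zy] : exists2 z, x < z & z < y.
  case: (pickP [pred z | (x < z) && (z < y)]) => [z /andP[? ?]|H']; first by exists z.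
  by case: H; split=> // z xz zy; move: (H' z); rewrite /= xz zy.
have [|c [xc cz]] := IH z _ zy.
  rewrite -ltnS; apply: leq_trans Hn; apply: proper_card; apply/properP; split.
    by apply/subsetP => w; rewrite !inE; apply: lt_trans.
  by exists z; rewrite !inE ?xz ?ltxx.
by exists c; split=> //; apply: le_trans (ltW xz) cz.
Qed.

Lemma mid_eq_up a u v : covL a u -> covL a v -> u <= v -> u = v.
Proof.
move=> au av; rewrite le_eqVlt => /orP[/eqP//|uv].
by case: (cov_nomid av (cov_lt au) uv).
Qed.

Lemma mid_eq_down b u v : covL u b -> covL v b -> u <= v -> u = v.
Proof.
move=> ub vb; rewrite le_eqVlt => /orP[/eqP//|uv].
by case: (cov_nomid ub uv (cov_lt vb)).
Qed.

End Basic.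
Section Realizer.
Variables (d : Order.disp_t) (L : finTBLatticeType d) (l1 l2 : rel L).
Hypothesis Hpd : planar_diagram l1 l2.
Implicit Types (S : {set L}) (x y z a b c e : L).

Definition Int x : bool :=
  [exists a, exists b, exists c1, exists c2,
    [&& covL a x, covL x b, covL a c1, covL c1 b, covL a c2, covL c2 b,
        leftof l1 c1 x & leftof l1 x c2]].

Let r1 : reflexive l1. Proof. by case: Hpd => [[]]. Qed.
Let a1 : antisymmetric l1. Proof. by case: Hpd => [[]]. Qed.
Let t1 : transitive l1. Proof. by case: Hpd => [[]]. Qed.
Let tot1 : total l1. Proof. by case: Hpd => [[]]. Qed.
Let a2 : antisymmetric l2. Proof. by case: Hpd => [_ []]. Qed.
Let t2 : transitive l2. Proof. by case: Hpd => [_ []]. Qed.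
Let tot2 : total l2. Proof. by case: Hpd => [_ []]. Qed.
Let Hle x y : (x <= y) = l1 x y && l2 x y. Proof. by case: Hpd. Qed.

Lemma leftofP u v : leftof l1 u v -> u != v /\ l1 u v.
Proof. by case/andP. Qed.

Lemma realizer_covers a x b c1 c2 :
  covL a x -> covL x b -> covL a c1 -> covL c1 b -> covL a c2 -> covL c2 b ->
  leftof l1 c1 x -> leftof l1 x c2 ->
  (forall y, covL x y -> y = b) /\ (forall y, covL y x -> y = a).
Proof.
move=> ax xb ac1 c1b ac2 c2b /leftofP[c1x lc1x] /leftofP[xc2 lxc2].
have incomp u : covL a u -> covL u b -> u != x -> ~~ (u <= x) /\ ~~ (x <= u).
  move=> au ub ux; split; apply/negP => H.
    by move/eqP: ux; apply; apply: mid_eq_up au ax H.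
  by move/eqP: ux; apply; apply/esym; apply: mid_eq_up ax au H.
have upc u y : covL a u -> covL u b -> u != x -> covL x y -> y != b -> u <= y -> False.
  move=> au ub ux xy yb uy; have [iu _] := incomp u au ub ux.
  have ujx : u `|` x = b.
    have xle : x <= u `|` x by rewrite leUr.
    have ble : u `|` x <= b by rewrite leUx (cov_le ub) (cov_le xb).
    move: xle; rewrite le_eqVlt => /orP[/eqP E|xl].
      by move: iu; rewrite E leUl.
    move: ble; rewrite le_eqVlt => /orP[/eqP//|lb].
    by case: (cov_nomid xb xl lb).
  have by' : b <= y by rewrite -ujx leUx uy (cov_le xy).
  move: by'; rewrite le_eqVlt => /orP[/eqP E|bl]; first by move: yb; rewrite E eqxx.
  by case: (cov_nomid xy (cov_lt xb) bl).
have dnc u y : covL a u -> covL u b -> u != x -> covL y x -> y != a -> y <= u -> False.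
  move=> au ub ux yx ya yu; have [_ iu] := incomp u au ub ux.
  have umx : u `&` x = a.
    have xle : u `&` x <= x by rewrite leIr.
    have ble : a <= u `&` x by rewrite lexI (cov_le au) (cov_le ax).
    move: xle; rewrite le_eqVlt => /orP[/eqP E|xl].
      by move: iu; rewrite -E leIl.
    move: ble; rewrite le_eqVlt => /orP[/eqP//|lb].
    by case: (cov_nomid ax lb xl).
  have ya' : y <= a by rewrite -umx lexI yu (cov_le yx).
  move: ya'; rewrite le_eqVlt => /orP[/eqP E|bl]; first by move: ya; rewrite E eqxx.
  by case: (cov_nomid yx bl (cov_lt ax)).
have c2x : c2 != x by rewrite eq_sym.
have [i1 i1'] := incomp _ ac1 c1b c1x.
have [i2 i2'] := incomp _ ac2 c2b c2x.
split=> y.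
  move=> xy; apply/eqP/negP => /negP yb.
  have lxy : l1 x y && l2 x y by rewrite -Hle (cov_le xy).
  case/andP: lxy => l1xy l2xy.
  have l1c1y : l1 c1 y := t1 lc1x l1xy.
  have l2yc1 : l2 y c1.
    case/orP: (tot2 c1 y) => // H; case: (upc c1 y ac1 c1b c1x xy yb).
    by rewrite Hle l1c1y H.
  have l2yb : l2 y b by apply: t2 l2yc1 _; move: (cov_le c1b); rewrite Hle => /andP[].
  have l2c2x : l2 c2 x.
    by case/orP: (tot2 c2 x) => // H; move: i2'; rewrite Hle lxc2 H.
  have l2c2y : l2 c2 y := t2 l2c2x l2xy.
  have l1yc2 : l1 y c2.
    case/orP: (tot1 c2 y) => // H; case: (upc c2 y ac2 c2b c2x xy yb).
    by rewrite Hle l2c2y H.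
  have l1yb : l1 y b by apply: t1 l1yc2 _; move: (cov_le c2b); rewrite Hle => /andP[].
  have yleb : y <= b by rewrite Hle l1yb l2yb.
  move: yleb; rewrite le_eqVlt => /orP[/eqP E|ylb]; first by move: yb; rewrite E eqxx.
  by case: (cov_nomid xb (cov_lt xy) ylb).
move=> yx; apply/eqP/negP => /negP ya.
have lyx : l1 y x && l2 y x by rewrite -Hle (cov_le yx).
case/andP: lyx => l1yx l2yx.
have l2xc1 : l2 x c1.
  by case/orP: (tot2 x c1) => // H; move: i1; rewrite Hle lc1x H.
have l2yc1 : l2 y c1 := t2 l2yx l2xc1.
have l1c1y : l1 c1 y.
  case/orP: (tot1 c1 y) => // H; case: (dnc c1 y ac1 c1b c1x yx ya).
  by rewrite Hle l2yc1 H.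
have l1ay : l1 a y by apply: t1 _ l1c1y; move: (cov_le ac1); rewrite Hle => /andP[].
have l1yc2 : l1 y c2 := t1 l1yx lxc2.
have l2c2y : l2 c2 y.
  case/orP: (tot2 c2 y) => // H; case: (dnc c2 y ac2 c2b c2x yx ya).
  by rewrite Hle l1yc2 H.
have l2ay : l2 a y by apply: t2 _ l2c2y; move: (cov_le ac2); rewrite Hle => /andP[].
have ayle : a <= y by rewrite Hle l1ay l2ay.
move: ayle; rewrite le_eqVlt => /orP[/eqP E|aly]; first by move: ya; rewrite E eqxx.
by case: (cov_nomid ax aly (cov_lt yx)).
Qed.


Lemma IntI a x b c1 c2 :
  covL a x -> covL x b -> covL a c1 -> covL c1 b -> covL a c2 -> covL c2 b ->
  leftof l1 c1 x -> leftof l1 x c2 -> Int x.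
Proof.
move=> h1 h2 h3 h4 h5 h6 h7 h8; apply/existsP; exists a; apply/existsP; exists b; apply/existsP; exists c1.
by apply/existsP; exists c2; rewrite h1 h2 h3 h4 h5 h6 h7 h8.
Qed.

Lemma IntE x : Int x -> exists a b, [/\ covL a x, covL x b,
  (forall y, covL x y -> y = b), (forall y, covL y x -> y = a) &
  exists c1 c2, [/\ covL a c1, covL c1 b, covL a c2, covL c2 b &
                    leftof l1 c1 x /\ leftof l1 x c2]].
Proof.
case/existsP=> a /existsP[b /existsP[c1 /existsP[c2 /andP[ax /andP[xb /andP[ac1 /andP[c1b /andP[ac2 /andP[c2b /andP[q1 q2]]]]]]]]]].
have [U D] := realizer_covers ax xb ac1 c1b ac2 c2b q1 q2.
by exists a, b; split=> //; exists c1, c2.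
Qed.

Lemma Int_mid a b x : Int x -> covL a x -> covL x b ->
  exists c1 c2, [/\ covL a c1, covL c1 b, covL a c2, covL c2 b &
                    leftof l1 c1 x /\ leftof l1 x c2].
Proof.
case/IntE=> a' [b' [_ _ U D [c1 [c2 H]]]] ax xb.
by rewrite (D _ ax) (U _ xb); exists c1, c2.
Qed.

Lemma Int_dbl x : Int x -> dbl_irr [set: L] x.
Proof.
case/IntE=> a [b [_ _ U D _]].
rewrite /dbl_irr; apply/andP; split.
  apply: leq_trans (_ : #|[set a]| <= 1)%N; last by rewrite cards1.
  by apply: subset_leq_card; apply/subsetP=> y; rewrite !inE => /D ->.
apply: leq_trans (_ : #|[set b]| <= 1)%N; last by rewrite cards1.
by apply: subset_leq_card; apply/subsetP=> y; rewrite !inE => /U ->.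
Qed.

Lemma Int_bounds x a b : Int x -> covL a x -> covL x b -> ~~ Int a /\ ~~ Int b.
Proof.
move=> Ix ax xb; have [c1 [c2 [ac1 c1b _ _ [/leftofP[c1x _] _]]]] := Int_mid Ix ax xb.
split; apply/negP => /IntE[a' [b' [_ _ U D _]]].
  by move: c1x; rewrite (U _ ac1) (U _ ax) eqxx.
by move: c1x; rewrite (D _ c1b) (D _ xb) eqxx.
Qed.

Lemma seq_min (r : rel L) : transitive r -> total r -> forall s : seq L, s != [::] ->
  exists2 m, m \in s & forall z, z \in s -> r m z.
Proof.
move=> tr to; elim=> [//|y s IH] _.
case: s IH => [|y' s'] IH.
  by exists y; rewrite ?inE // => z; rewrite inE => /eqP ->; case/orP: (to y y).
have [m ms Hm] := IH isT.
case/orP: (to y m) => H.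
  exists y; first by rewrite inE eqxx.
  move=> z; rewrite inE => /orP[/eqP ->|zs]; first by case/orP: (to y y).
  exact: tr H (Hm z zs).
exists m; first by rewrite inE ms orbT.
by move=> z; rewrite inE => /orP[/eqP ->|zs]; [exact: H | exact: Hm].
Qed.

Lemma ext_mid a b x : covL a x -> covL x b -> exists lm rm,
  [/\ covL a lm /\ covL lm b, covL a rm /\ covL rm b, ~~ Int lm /\ ~~ Int rm,
      (forall z, covL a z -> covL z b -> l1 lm z) &
      (forall z, covL a z -> covL z b -> l1 z rm)].
Proof.
move=> ax xb; pose M := [set z | covL a z && covL z b].
have xM : x \in enum M by rewrite mem_enum inE ax xb.
have ne : enum M != [::] by case: (enum M) xM.
have [lm lmM Hlm] := seq_min t1 tot1 ne.
have tr' : transitive (fun u v => l1 v u) by move=> ? ? ? H1 H2; exact: t1 H2 H1.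
have to' : total (fun u v => l1 v u) by move=> u v; rewrite orbC tot1.
have [rm rmM Hrm] := seq_min tr' to' ne.
move: lmM rmM; rewrite !mem_enum !inE => /andP[alm lmb] /andP[arm rmb].
have Hl z : covL a z -> covL z b -> l1 lm z by move=> az zb; apply: Hlm; rewrite mem_enum inE az zb.
have Hr z : covL a z -> covL z b -> l1 z rm by move=> az zb; apply: Hrm; rewrite mem_enum inE az zb.
exists lm, rm; split=> //; split; apply/negP => I.
  have [c1 [_ [ac1 c1b _ _ [/leftofP[c1x l] _]]]] := Int_mid I alm lmb.
  by move: c1x; rewrite (a1 (x:=c1) (y:=lm)) ?eqxx // l Hl.
have [_ [c2 [_ _ ac2 c2b [_ /leftofP[c2x l]]]]] := Int_mid I arm rmb.
by move: c2x; rewrite (a1 (x:=rm) (y:=c2)) ?eqxx // l Hr.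
Qed.

Lemma count_Int a b : #|[set e | Int e && covL a e && covL e b]| =
                      (#|[set e | covL a e && covL e b]| - 2)%N.
Proof.
pose M := [set e | covL a e && covL e b]; rewrite -/M.
case: (pickP (mem M)) => [x|M0]; last first.
  have E0 : [set e | Int e && covL a e && covL e b] = set0.
    apply/setP => z; rewrite !inE; apply/negbTE/negP => /andP[/andP[_ az] zb].
    by move: (M0 z); rewrite /= inE az zb.
  have M00 : M = set0 by apply/setP => z; rewrite in_set0; exact: (M0 z).
  by rewrite E0 M00 !cards0.
move=> xM; have : x \in M by []. rewrite inE => /andP[ax xb].
have [lm [rm [[alm lmb] [arm rmb] [nlm nrm] Hl Hr]]] := ext_mid ax xb.
have E : [set e | Int e && covL a e && covL e b] = M :\ lm :\ rm.
  apply/setP => z; rewrite !inE; apply/idP/idP.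
    case/andP=> /andP[Iz az] zb; rewrite az zb !andbT.
    by apply/andP; split; apply/negP => /eqP E; move: Iz; rewrite E ?(negbTE nlm) ?(negbTE nrm).
  case/and3P=> zrm zlm /andP[az zb]; rewrite az zb !andbT.
  apply: (IntI az zb alm lmb arm rmb); rewrite /leftof.
    by rewrite eq_sym zlm Hl.
  by rewrite zrm Hr.
case: (lm =P rm) => [Elr|Nlr].
  have M1 : M = [set lm].
    apply/setP=> z; rewrite !inE; apply/idP/idP => [/andP[az zb]|/eqP->]; last by rewrite alm lmb.
    by apply/eqP; apply: a1; rewrite Hl // Elr Hr.
  by rewrite E M1 setDv set0D cards0 cards1.
rewrite E (cardsD1 lm M) (cardsD1 rm (M :\ lm)) !inE alm lmb arm rmb.
have -> : (rm != lm) = true by apply/eqP => E'; apply: Nlr.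
by rewrite /= add1n add1n subSS subSS subn0.
Qed.

End Realizer.

Section Char.
Variables (d : Order.disp_t) (L : finTBLatticeType d) (l1 l2 : rel L).
Hypothesis Hpd : planar_diagram l1 l2.
Hypothesis Hsm : semimodular L.
Implicit Types (S : {set L}) (x y z a b c e u v : L).

Lemma len2 a c b z : covL a c -> covL c b -> a < z -> z < b -> covL a z /\ covL z b.
Proof.
move=> ac cb az zb.
have P y : a < y -> y < b -> ~~ (c <= y) -> covL y b.
  move=> ay yb ncy.
  have := (Hsm (x:=a) (y:=c) y ac); rewrite (join_idPr (ltW ay)).
  have cyb : c `|` y = b.
    have h1 : c <= c `|` y by rewrite leUl.
    have h2 : c `|` y <= b by rewrite leUx (cov_le cb) (ltW yb).
    move: h1; rewrite le_eqVlt => /orP[/eqP E|cl].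
      have yc : y <= c by rewrite E leUr.
      move: yc; rewrite le_eqVlt => /orP[/eqP E'|yc]; first by move: ncy; rewrite E' lexx.
      by case: (cov_nomid ac ay yc).
    move: h2; rewrite le_eqVlt => /orP[/eqP//|lb].
    by case: (cov_nomid cb cl lb).
  by rewrite cyb (lt_eqF yb).
case: (boolP (c <= z)) => cz.
  move: cz; rewrite le_eqVlt => /orP[/eqP <-|cz]; first by [].
  by case: (cov_nomid cb cz zb).
have zb' := P z az zb cz; split=> //.
apply: covI => // w aw wz.
case: (boolP (c <= w)) => cw.
  have czz := le_lt_trans cw wz.
  by case: (cov_nomid cb czz zb).
have wb := P w aw (lt_trans wz zb) cw.
by case: (cov_nomid wb wz zb).
Qed.

Lemma covS_covL' S u v : (forall x, x \notin S -> Int l1 x) -> covS S u v -> covL u v.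
Proof.
move=> Hc uv; apply: covI => [|z uz zv]; first exact: covS_lt uv.
case: (boolP (z \in S)) => zS; first exact: covS_nomid uv zS uz zv.
have /(IntE Hpd)[a [b [az zb U D _]]] := Hc z zS.
have [lm [rm [[alm lmb] _ [nlm _] _ _]]] := ext_mid Hpd az zb.
have lmS : lm \in S by apply/negPn/negP => /Hc; rewrite (negbTE nlm).
have [c [cz uc]] := down_cover uz; rewrite (D _ cz) in uc.
have [c' [zc' c'v]] := up_cover zv; rewrite (U _ zc') in c'v.
apply: (covS_nomid uv lmS).
  exact: le_lt_trans uc (cov_lt alm).
exact: lt_le_trans (cov_lt lmb) c'v.
Qed.

Lemma eye_Int S e : (forall x, x \notin S -> Int l1 x) -> eye l1 S e -> Int l1 e.
Proof.
move=> Hc /and3P[eS _ /existsP[a /existsP[b /existsP[c1 /existsP[c2 H]]]]].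
move: H => /andP[I /andP[ae /andP[eb /andP[c1S /andP[ac1 /andP[c1b /andP[c2S /andP[ac2 /andP[c2b /andP[l1e le2]]]]]]]]]].
move: I => /and5P[aS bS ab _ /forallP HI].
have H z : z \in S -> a < z -> z < b -> covL a z /\ covL z b.
  move=> zS az zb; move: (HI z); rewrite zS az zb /= => /andP[h1 h2].
  by split; apply: covS_covL' Hc _.
have [h1 h2] := H e eS ae eb; have [h3 h4] := H c1 c1S ac1 c1b; have [h5 h6] := H c2 c2S ac2 c2b.
exact: IntI h1 h2 h3 h4 h5 h6 l1e le2.
Qed.

Lemma reach_Int S : slimming_reach l1 S -> forall x, x \notin S -> Int l1 x.
Proof.
elim=> [|S' e HS IH He] x; first by rewrite in_setT.
rewrite !inE negb_and negbK => /orP[/eqP ->|]; last exact: IH.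
exact: eye_Int IH He.
Qed.

Lemma full_char S : full_slimming l1 S -> S = [set x | ~~ Int l1 x].
Proof.
case=> HS Hno; have Hc := reach_Int HS.
have memS y : ~~ Int l1 y -> y \in S by move=> ny; apply/negPn/negP => /Hc; rewrite (negbTE ny).
apply/setP => x; rewrite inE; case: (boolP (x \in S)) => xS; last by rewrite (Hc x xS).
apply/esym/negP => Ix; apply: (negP (Hno x)).
have /(IntE Hpd)[a [b [ax xb U D _]]] := Ix.
have [lm [rm [[alm lmb] [arm rmb] [nlm nrm] Hl Hr]]] := ext_mid Hpd ax xb.
have [na nb] := Int_bounds Hpd Ix ax xb.
have aS := memS _ na; have bS := memS _ nb.
have lmS := memS _ nlm; have rmS := memS _ nrm.
apply/and3P; split=> //.
  apply/andP; split.
    apply: leq_trans (_ : #|[set a]| <= 1)%N; last by rewrite cards1.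
    apply: subset_leq_card; apply/subsetP=> y; rewrite !inE => /(covS_covL' Hc).
    by move/D ->.
  apply: leq_trans (_ : #|[set b]| <= 1)%N; last by rewrite cards1.
  apply: subset_leq_card; apply/subsetP=> y; rewrite !inE => /(covS_covL' Hc).
  by move/U ->.
apply/existsP; exists a; apply/existsP; exists b; apply/existsP; exists lm; apply/existsP; exists rm.
have lmx : lm != x by apply/eqP => E; move: nlm; rewrite E Ix.
have xrm : x != rm by apply/eqP => E; move: nrm; rewrite -E Ix.
rewrite /leftof lmx xrm (Hl x ax xb) (Hr x ax xb) lmS rmS.
rewrite !(cov_lt alm) !(cov_lt lmb) !(cov_lt arm) !(cov_lt rmb) !(cov_lt ax) !(cov_lt xb) /= andbT.
rewrite /interval_len2 aS bS (lt_trans (cov_lt ax) (cov_lt xb)) /=.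
apply/andP; split; first by apply/existsP; exists x; rewrite xS (cov_lt ax) (cov_lt xb).
apply/forallP => z; apply/implyP => /and3P[zS az zb].
have [h1 h2] := len2 ax xb az zb.
by rewrite !covS_covL.
Qed.


Lemma nu_char x : nu l1 [set y | ~~ Int l1 y] x = #|[set e | Int l1 e && covL x e]|.
Proof.
have [[_ a1 t1 _] _ _] := Hpd.
set S := [set y | ~~ Int l1 y].
have Hc y : y \notin S -> Int l1 y by rewrite inE negbK.
have memS y : ~~ Int l1 y -> y \in S by rewrite inE.
rewrite /nu; apply: eq_card => e; rewrite !inE negbK; apply/idP/idP.
  case/andP => Ie /existsP[c1 /existsP[c2 /existsP[t /and5P[/and5P[_ xc1 _ c1t _] xe et _ _]]]].
  have h1 := covS_covL' Hc xc1; have h2 := covS_covL' Hc c1t.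
  by case: (len2 h1 h2 xe et) => ->; rewrite Ie.
case/andP=> Ie xe.
have /(IntE Hpd)[a [b [_ eb U D _]]] := Ie.
have [lm [rm [[alm lmb] [arm rmb] [nlm nrm] Hl Hr]]] := ext_mid Hpd xe eb.
have [nx nb] := Int_bounds Hpd Ie xe eb.
have lme : lm != e by apply/eqP => E; move: nlm; rewrite E Ie.
have erm : e != rm by apply/eqP => E; move: nrm; rewrite -E Ie.
have l1e := Hl e xe eb; have le2 := Hr e xe eb.
have lmrm : lm != rm.
  apply/negP => /eqP E; move/negP: lme; apply; apply/eqP; apply: a1.
  by rewrite l1e E le2.
have ce : [exists c1, exists c2, exists t, [&& cell4 l1 S x c1 c2 t, x < e, e < t,
            leftof l1 c1 e & leftof l1 e c2]].
  apply/existsP; exists lm; apply/existsP; exists rm; apply/existsP; exists b.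
  rewrite /cell4 /leftof lmrm lme erm l1e le2 (t1 _ _ _ l1e le2) (cov_lt xe) (cov_lt eb) /=.
  by rewrite !covS_covL ?memS.
by rewrite Ie ce.
Qed.

End Char.

Lemma cmpE d (L : finTBLatticeType d) (x y : L) : (x >=< y) = (x <= y) || (y <= x).
Proof. by []. Qed.

Section GS.
Variables (d : Order.disp_t) (L : finTBLatticeType d) (l1 l2 : rel L).
Hypothesis Hpd : planar_diagram l1 l2.
Implicit Types (S : {set L}) (x y z a b c e u v : L).

Lemma mid_incmp a u v : covL a u -> covL a v -> u != v -> ~~ (u >=< v).
Proof.
move=> au av uv; rewrite cmpE negb_or; apply/andP; split; apply/negP => H.
  by move: uv; rewrite (mid_eq_up au av H) eqxx.
by move: uv; rewrite (mid_eq_up av au H) eqxx.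
Qed.

Lemma mid_meet a u v : covL a u -> covL a v -> u != v -> u `&` v = a.
Proof.
move=> au av uv.
have h1 : a <= u `&` v by rewrite lexI !cov_le.
have h2 : u `&` v <= u by rewrite leIl.
move: h2; rewrite le_eqVlt => /orP[/eqP E|lt].
  have : u <= v by rewrite -E leIr.
  by move/(mid_eq_up au av) => E'; move: uv; rewrite E' eqxx.
move: h1; rewrite le_eqVlt => /orP[/eqP//|lt'].
by case: (cov_nomid au lt' lt).
Qed.

Lemma mid_join b u v : covL u b -> covL v b -> u != v -> u `|` v = b.
Proof.
move=> ub vb uv.
have h1 : u `|` v <= b by rewrite leUx !cov_le.
have h2 : u <= u `|` v by rewrite leUl.
move: h2; rewrite le_eqVlt => /orP[/eqP E|lt].
  have : v <= u by rewrite E leUr.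
  by move/(mid_eq_down vb ub) => E'; move: uv; rewrite E' eqxx.
move: h1; rewrite le_eqVlt => /orP[/eqP//|lt'].
by case: (cov_nomid ub lt lt').
Qed.

Lemma Int_ext_neq x : Int l1 x -> exists a b lm rm,
  [/\ covL a lm /\ covL lm b, covL a rm /\ covL rm b, ~~ Int l1 lm /\ ~~ Int l1 rm,
      covL a x /\ covL x b & lm != rm].
Proof.
have [[_ a1 t1 _] _ _] := Hpd.
move=> Ix; have /(IntE Hpd)[a [b [ax xb U D _]]] := Ix.
have [lm [rm [[alm lmb] [arm rmb] [nlm nrm] Hl Hr]]] := ext_mid Hpd ax xb.
exists a, b, lm, rm; split=> //.
apply/negP => /eqP E.
have lx : lm = x by apply: a1; rewrite Hl // E Hr.
by move: nlm; rewrite lx Ix.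
Qed.

Lemma gs_char : gs_indecomposable [set: L] <-> gs_indecomposable [set x | ~~ Int l1 x].
Proof.
set S := [set x | ~~ Int l1 x].
have memS y : ~~ Int l1 y -> y \in S by rewrite inE.
split=> [[nch H]|[nch H]]; split.
- case: (pickP (Int l1)) => [z Iz|NI].
    have [a [b [lm [rm [[alm lmb] [arm rmb] [nlm nrm] _ ne]]]]] := Int_ext_neq Iz.
    apply/negP => /forallP /(_ lm) /forallP /(_ rm); rewrite !memS //=.
    by apply/negP; apply: mid_incmp alm arm ne.
  have -> : S = [set: L] by apply/setP => y; rewrite !inE NI.
  exact: nch.
- move=> x xS xb xt; have [y _ nxy] := H x (in_setT x) xb xt.
  case: (boolP (y \in S)) => yS; first by exists y.
  have Iy : Int l1 y by move: yS; rewrite inE negbK.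
  have [a [b [lm [rm [[alm lmb] [arm rmb] [nlm nrm] [ay yb] ne]]]]] := Int_ext_neq Iy.
  case: (boolP (x >=< lm)) => cl; last by exists lm; rewrite ?memS.
  case: (boolP (x >=< rm)) => cr; last by exists rm; rewrite ?memS.
  exfalso; move: cl cr nxy; rewrite !cmpE => /orP[] h1 /orP[] h2.
  + have xa : x <= a by rewrite -(mid_meet alm arm ne) lexI h1 h2.
    by rewrite (le_trans xa (cov_le ay)).
  + have := le_trans h2 h1; move/(mid_eq_up arm alm) => E.
    by move: ne; rewrite E eqxx.
  + have := le_trans h1 h2; move/(mid_eq_up alm arm) => E.
    by move: ne; rewrite E eqxx.
  + have bx : b <= x by rewrite -(mid_join lmb rmb ne) leUx h1 h2.
    by rewrite (le_trans (cov_le yb) bx) orbT.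
- apply/negP => /forallP Hc; move/negP: nch; apply; apply/forallP => x.
  apply/forallP => y; apply/implyP => _.
  by move: (Hc x) => /forallP /(_ y); rewrite !in_setT.
- move=> x _ xb xt.
  case: (boolP (x \in S)) => xS.
    by have [y yS nxy] := H x xS xb xt; exists y; rewrite ?in_setT.
  have Ix : Int l1 x by move: xS; rewrite inE negbK.
  have /(IntE Hpd)[a [b [ax xb' _ _ [c1 [_ [ac1 _ _ _ [/andP[c1x _] _]]]]]]] := Ix.
  by exists c1; rewrite ?in_setT // (mid_incmp ax ac1) // eq_sym.
Qed.

End GS.

Section PermEx.
Variables (T : finType) (K : eqType) (key : T -> K) (U : {set T}).

Lemma perm_base (A B : {set T}) : A :\: B = set0 ->
  (forall k, #|[set x in A | key x == k]| = #|[set x in B | key x == k]|) -> A = B.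
Proof.
move=> E Hk; have AB : A \subset B by rewrite -setD_eq0 E.
apply/eqP; rewrite eqEsubset AB /=; apply/subsetP => y yB.
have Ek : [set x in A | key x == key y] = [set x in B | key x == key y].
  apply/eqP; rewrite eqEcard Hk leqnn andbT.
  by apply/subsetP => z; rewrite !inE => /andP[/(subsetP AB) -> ->].
by have := in_setT y; move: (Ek); move/setP/(_ y); rewrite !inE yB eqxx andbT => ->.
Qed.

Lemma perm_exists n (A B : {set T}) : (#|A :\: B| <= n)%N -> A \subset U -> B \subset U ->
  (forall k, #|[set x in A | key x == k]| = #|[set x in B | key x == k]|) ->
  exists p : {perm T}, [set p x | x in A] = B /\
    forall z, p z = z \/ [/\ z \in U, p z \in U & key (p z) = key z].
Proof.
elim: n A => [|n IH] A Hn AU BU Hk.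
  have E : A :\: B = set0 by apply/eqP; rewrite -cards_eq0 -leqn0.
  exists 1%g; split; last by move=> z; left; rewrite perm1.
  rewrite -(perm_base E Hk); apply/setP => z; apply/imsetP/idP => [[w wA ->]|zA].
    by rewrite perm1.
  by exists z; rewrite ?perm1.
case: (set_0Vmem (A :\: B)) => [E|[x]].
  exists 1%g; split; last by move=> z; left; rewrite perm1.
  rewrite -(perm_base E Hk); apply/setP => z; apply/imsetP/idP => [[w wA ->]|zA].
    by rewrite perm1.
  by exists z; rewrite ?perm1.
rewrite inE => /andP[xB xA].
have [y yB /andP[yA' /eqP ky]] : exists2 y, y \in B & (y \notin A) && (key y == key x).
  case: (boolP ([set z in B | key z == key x] \subset [set z in A | key z == key x])) => [sub|].
    have : [set z in B | key z == key x] == [set z in A | key z == key x].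
      by rewrite eqEcard sub Hk leqnn.
    by move/eqP/setP/(_ x); rewrite !inE xA eqxx (negbTE xB).
  case/subsetPn => z; rewrite !inE => /andP[zB kz] /negP nz.
  exists z => //; rewrite kz andbT; apply/negP => zA; apply: nz; by rewrite zA.
set t := tperm x y.
have keyt z : key (t z) = key z.
  by rewrite /t; case: tpermP => [->|->|] //.
have memt (C : {set T}) z : (z \in [set t w | w in C]) = (t z \in C).
  by rewrite -{1}(tpermK x y z) mem_imset //; apply: perm_inj.
set A' := [set t w | w in A].
have A'U : A' \subset U.
  apply/subsetP => z; rewrite memt /t; case: tpermP => [->|->|_ _] H.
  - by rewrite (negbTE yA') in H.
  - exact: (subsetP BU).
  - exact: (subsetP AU).
have Hk' k : #|[set z in A' | key z == k]| = #|[set z in B | key z == k]|.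
  rewrite -Hk; have -> : [set z in A' | key z == k] = [set t w | w in [set z in A | key z == k]].
    by apply/setP => z; rewrite memt !inE memt keyt.
  by rewrite card_imset //; apply: perm_inj.
have Hn' : (#|A' :\: B| <= n)%N.
  have sub : A' :\: B \subset (A :\: B) :\ x.
    apply/subsetP => z; rewrite !inE memt => /andP[zB]; rewrite /t.
    case: tpermP => [_|zy|/eqP zx _] H.
    - by rewrite (negbTE yA') in H.
    - by move: zB; rewrite zy yB.
    - by rewrite zx zB H.
  rewrite -ltnS; apply: leq_trans Hn; apply: leq_ltn_trans (subset_leq_card sub) _.
  by rewrite (cardsD1 x (A :\: B)) !inE xA xB.
have [p' [Ep' Hp']] := IH A' Hn' A'U BU Hk'.
exists (t * p')%g; split.
  rewrite -Ep' -imset_comp; apply: eq_imset => z; by rewrite permM.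
move=> z; rewrite permM.
have [tz|] := eqVneq (t z) z.
  by rewrite tz; apply: Hp'.
move: (Hp' (t z)) => H tz; right.
have zU : z \in U /\ t z \in U.
  move: tz; rewrite /t; case: tpermP => [->|->|_ _]; last by rewrite eqxx.
  - by move=> _; split; [exact: (subsetP AU) | exact: (subsetP BU)].
  - by move=> _; split; [exact: (subsetP BU) | exact: (subsetP AU)].
case: zU => zU tzU.
case: H => [->|[_ ? ->]]; first by split; rewrite ?keyt.
by split; rewrite ?keyt.
Qed.

End PermEx.

Section IsoGen.
Variables (d1 d2 : Order.disp_t) (L1 : finTBLatticeType d1) (L2 : finTBLatticeType d2).
Variable f : L1 -> L2.
Hypothesis fbij : bijective f.
Hypothesis ford : forall x y, (x <= y) = (f x <= f y).

Lemma ord_lattice_iso : lattice_iso f.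
Proof.
have [g fK gK] := fbij.
split=> // x y; apply/le_anti/andP; split.
- by rewrite -[_ `|` f y]gK -ford leUx !ford !gK !leUl leUr.
- by rewrite leUx -!ford leUl leUr.
- by rewrite lexI -!ford leIl leIr.
- by rewrite -[_ `&` f y]gK -ford lexI !ford !gK leIl leIr.
Qed.

Lemma ford_lt x y : (x < y) = (f x < f y).
Proof. by rewrite !lt_def ford (inj_eq (bij_inj fbij)). Qed.

Lemma iso_cov x y : covL x y = covL (f x) (f y).
Proof.
have [g fK gK] := fbij.
apply/covLP/covLP => [[xy H]|[xy H]]; split.
- by rewrite -ford_lt.
- by move=> z xz zy; apply: (H (g z)); rewrite ford_lt gK.
- by rewrite ford_lt.
- by move=> z xz zy; apply: (H (f z)); rewrite -ford_lt.
Qed.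

End IsoGen.

Lemma iso_ord d1 d2 (L1 : finTBLatticeType d1) (L2 : finTBLatticeType d2) (f : L1 -> L2) :
  lattice_iso f -> forall x y, (x <= y) = (f x <= f y).
Proof.
case=> fb fj _ x y; rewrite !leEjoin -fj (inj_eq (bij_inj fb)) //.
Qed.

Section Core.
Variables (d : Order.disp_t) (L : finTBLatticeType d) (l1 l2 m1 m2 : rel L).
Hypothesis Hpd : planar_diagram l1 l2.
Hypothesis Hpm : planar_diagram m1 m2.
Implicit Types (x y z a b c e u v : L).

Definition key (x : L) := ([set y | covL y x], [set y | covL x y]).

Lemma key_unique z a b : key z = ([set a], [set b]) ->
  [/\ covL a z, covL z b, (forall y, covL z y -> y = b) & (forall y, covL y z -> y = a)].
Proof.
case=> E1 E2; split.
- have : a \in [set y | covL y z] by rewrite E1 set11.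
  by rewrite inE.
- have : b \in [set y | covL z y] by rewrite E2 set11.
  by rewrite inE.
- move=> y zy; have : y \in [set y | covL z y] by rewrite inE.
  by rewrite E2 inE => /eqP.
- move=> y yz; have : y \in [set y | covL y z] by rewrite inE.
  by rewrite E1 inE => /eqP.
Qed.

Lemma Int_key (r1 r2 : rel L) (H : planar_diagram r1 r2) x a b :
  Int r1 x -> covL a x -> covL x b -> key x = ([set a], [set b]).
Proof.
move=> Ix ax xb; have /(IntE H)[a' [b' [_ _ U D _]]] := Ix.
congr pair; apply/setP => y; rewrite !inE; apply/idP/eqP => [|->] //.
- by move/D => ->; rewrite (D _ ax).
- by move/U => ->; rewrite (U _ xb).
Qed.

Lemma cnt_key (r1 r2 : rel L) (H : planar_diagram r1 r2) a b :
  #|[set z | Int r1 z && (key z == ([set a], [set b]))]| =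
  (#|[set e | covL a e && covL e b]| - 2)%N.
Proof.
rewrite -(count_Int H); apply: eq_card => z; rewrite !inE.
case Iz: (Int r1 z); rewrite ?andTb ?andFb //; apply/eqP/andP => [E|[az zb]].
  by have [? ? _ _] := key_unique E.
exact: (Int_key H Iz az zb).
Qed.

Lemma notInt_low (r1 r2 : rel L) (H : planar_diagram r1 r2) b u v :
  covL u b -> covL v b -> u != v -> ~~ Int r1 b.
Proof.
move=> ub vb uv; apply/negP => /(IntE H)[a' [b' [_ _ _ D _]]].
by move: uv; rewrite (D _ ub) (D _ vb) eqxx.
Qed.

Lemma notInt_up (r1 r2 : rel L) (H : planar_diagram r1 r2) a u v :
  covL a u -> covL a v -> u != v -> ~~ Int r1 a.
Proof.
move=> au av uv; apply/negP => /(IntE H)[a' [b' [_ _ U _ _]]].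
by move: uv; rewrite (U _ au) (U _ av) eqxx.
Qed.

Let U := [set x | Int l1 x] :|: [set x | Int m1 x].

Lemma U_info z : z \in U -> exists a b, [/\ key z = ([set a], [set b]), a \notin U & b \notin U].
Proof.
have gen (r1 r2 : rel L) (H : planar_diagram r1 r2) : Int r1 z ->
    exists a b, [/\ key z = ([set a], [set b]), a \notin U & b \notin U].
  move=> Iz; have /(IntE H)[a [b [az zb _ _ [c1 [_ [ac1 c1b _ _ [/andP[c1z _] _]]]]]]] := Iz.
  exists a, b; split; first exact: (Int_key H Iz az zb).
    by rewrite !inE negb_or (notInt_up Hpd az ac1) ?(notInt_up Hpm az ac1) // eq_sym.
  by rewrite !inE negb_or (notInt_low Hpd zb c1b) ?(notInt_low Hpm zb c1b) // eq_sym.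
by rewrite !inE => /orP[]; [apply: gen Hpd | apply: gen Hpm].
Qed.

Lemma char_up z b : covL z b -> (forall y, covL z y -> y = b) ->
  forall y, y != z -> (z <= y) = (b <= y).
Proof.
move=> zb Ub y yz; apply/idP/idP => [zy|by'].
  have zy' : z < y by rewrite lt_def yz zy.
  by have [c [zc cy]] := up_cover zy'; rewrite -(Ub _ zc).
exact: le_trans (cov_le zb) by'.
Qed.

Lemma char_down z a : covL a z -> (forall y, covL y z -> y = a) ->
  forall y, y != z -> (y <= z) = (y <= a).
Proof.
move=> az Da y yz; apply/idP/idP => [yz'|ya].
  have yz2 : y < z by rewrite lt_def eq_sym yz yz'.
  by have [c [cz yc]] := down_cover yz2; rewrite -(Da _ cz).
exact: le_trans ya (cov_le az).
Qed.

Lemma core : exists pi : L -> L,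
  [/\ lattice_iso pi, (forall x, reducible x -> pi x = x),
      (forall x y, (x <= y) = (pi x <= pi y)) &
      (forall x, Int m1 (pi x) = Int l1 x)].
Proof.
set A := [set x | Int l1 x]; set B := [set x | Int m1 x].
have Hk k : #|[set x in A | key x == k]| = #|[set x in B | key x == k]|.
  case: (pickP (fun x => (x \in U) && (key x == k))) => [x /andP[xU /eqP kx]|none].
    have [a [b [kab _ _]]] := U_info xU.
    rewrite -kx kab.
    have -> : [set x in A | key x == ([set a], [set b])] =
              [set z | Int l1 z && (key z == ([set a], [set b]))] by apply/setP => z; rewrite !inE.
    have -> : [set x in B | key x == ([set a], [set b])] =
              [set z | Int m1 z && (key z == ([set a], [set b]))] by apply/setP => z; rewrite !inE.
    by rewrite (cnt_key Hpd) (cnt_key Hpm).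
  have E (C : {set L}) : C \subset U -> [set x in C | key x == k] = set0.
    move=> CU; apply/setP => z; rewrite !inE; apply/negbTE/negP => /andP[zC kz].
    by move: (none z); rewrite /= (subsetP CU _ zC) kz.
  by rewrite !E ?subsetUl ?subsetUr.
have [p [Ep Hp]] := perm_exists (key:=key) (U:=U) (leqnn #|A :\: B|) (subsetUl A B) (subsetUr A B) Hk.
have Hm z : p z != z -> exists a b, [/\ key z = ([set a], [set b]),
    key (p z) = ([set a], [set b]), a \notin U, b \notin U & (z \in U) && (p z \in U)].
  move=> nz; case: (Hp z) => [E|[zU pzU kpz]]; first by rewrite E eqxx in nz.
  have [a [b [kz na nb]]] := U_info zU.
  by exists a, b; rewrite kpz kz zU pzU.
have ord x y : (x <= y) = (p x <= p y).
  have [<-|xy] := eqVneq x y; first by rewrite !lexx.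
  have pxy : p x != p y by rewrite (inj_eq perm_inj).
  have [fx|mx] := eqVneq (p x) x.
    rewrite fx; have [fy|my] := eqVneq (p y) y; first by rewrite fy.
    have [a [b [kz kpz _ _ _]]] := Hm y my.
    have [ay _ _ Da] := key_unique kz; have [ay' _ _ Da'] := key_unique kpz.
    rewrite (char_down ay Da) // (char_down ay' Da') //.
    by rewrite -fx.
  have [a [b [kz kpz _ nb _]]] := Hm x mx.
  have [_ xb Ub _] := key_unique kz; have [_ xb' Ub' _] := key_unique kpz.
  rewrite (char_up xb Ub) 1?eq_sym // (char_up xb' Ub') 1?eq_sym //.
  have [fy|my] := eqVneq (p y) y; first by rewrite fy.
  have [a2 [b2 [kz2 kpz2 _ _ /andP[yU pyU]]]] := Hm y my.
  have [ay _ _ Da] := key_unique kz2; have [ay' _ _ Da'] := key_unique kpz2.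
  have by' : b != y by apply/eqP => E; move: nb; rewrite E yU.
  have bpy : b != p y by apply/eqP => E; move: nb; rewrite E pyU.
  by rewrite (char_down ay Da) // (char_down ay' Da').
have pbij : bijective p by exists (p^-1)%g; [apply: permK | apply: permKV].
exists p; split=> //.
- exact: ord_lattice_iso pbij ord.
- move=> x; case: (Hp x) => [//|[xU _ _]].
  rewrite /reducible; move: xU; rewrite !inE => /orP[] I.
    by rewrite (Int_dbl Hpd I).
  by rewrite (Int_dbl Hpm I).
- move=> x; have : (p x \in B) = (x \in A) by rewrite -Ep mem_imset //; apply: perm_inj.
  by rewrite !inE.
Qed.

End Core.

Section Transport.
Variables (d1 d2 : Order.disp_t) (L1 : finTBLatticeType d1) (L2 : finTBLatticeType d2).
Variables (phi : L1 -> L2) (m1 m2 : rel L2).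
Hypothesis Hiso : lattice_iso phi.
Hypothesis Hpm : planar_diagram m1 m2.

Definition pull (r : rel L2) : rel L1 := fun x y => r (phi x) (phi y).

Let pbij : bijective phi. Proof. by case: Hiso. Qed.
Let pinj : injective phi. Proof. exact: bij_inj pbij. Qed.
Let pord := iso_ord Hiso.

Lemma pull_lin r : linear_order r -> linear_order (pull r).
Proof.
case=> rr ar tr tor; split.
- by move=> x; apply: rr.
- by move=> x y H; apply: pinj; apply: ar.
- by move=> y x z; apply: tr.
- by move=> x y; apply: tor.
Qed.

Lemma planar_pull : planar_diagram (pull m1) (pull m2).
Proof.
case: Hpm => h1 h2 h3; split; try exact: pull_lin.
by move=> x y; rewrite pord h3.
Qed.

Lemma Int_pull x : Int (pull m1) x = Int m1 (phi x).
Proof.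
have [g fK gK] := pbij.
have cv := iso_cov pbij pord.
apply/idP/idP.
  case/existsP=> a /existsP[b /existsP[c1 /existsP[c2 H]]].
  move: H => /andP[h1 /andP[h2 /andP[h3 /andP[h4 /andP[h5 /andP[h6 /andP[h7 h8]]]]]]].
  apply: (IntI (a:=phi a) (b:=phi b) (c1:=phi c1) (c2:=phi c2)); rewrite -?cv //.
  - by rewrite /leftof (inj_eq pinj).
  - by rewrite /leftof (inj_eq pinj).
case/existsP=> a /existsP[b /existsP[c1 /existsP[c2 H]]].
move: H => /andP[h1 /andP[h2 /andP[h3 /andP[h4 /andP[h5 /andP[h6 /andP[h7 h8]]]]]]].
apply: (IntI (a:=g a) (b:=g b) (c1:=g c1) (c2:=g c2)); rewrite ?cv ?gK ?fK //.
- by rewrite /leftof /pull gK -(inj_eq pinj) gK.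
- by rewrite /leftof /pull gK -(inj_eq pinj) gK.
Qed.

End Transport.

Lemma card_transfer d1 d2 (L1 : finTBLatticeType d1) (L2 : finTBLatticeType d2)
  (f : L1 -> L2) (P1 : pred L1) (P2 : pred L2) : bijective f ->
  (forall x, P2 (f x) = P1 x) -> #|[set x | P1 x]| = #|[set y | P2 y]|.
Proof.
case=> g fK gK HP; rewrite -(card_imset _ (can_inj fK)); apply: eq_card => y.
rewrite -{1}(gK y) mem_imset ?inE -?HP ?gK //; exact: can_inj fK.
Qed.

Lemma image_transfer d1 d2 (L1 : finTBLatticeType d1) (L2 : finTBLatticeType d2)
  (f : L1 -> L2) (P1 : pred L1) (P2 : pred L2) : bijective f ->
  (forall x, P2 (f x) = P1 x) -> [set f x | x in [set x | P1 x]] = [set y | P2 y].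
Proof.
case=> g fK gK HP; apply/setP => y.
by rewrite -{1}(gK y) mem_imset ?inE -?HP ?gK //; exact: can_inj fK.
Qed.

Theorem mainTheorem8 :
  (* (i) *)
  (forall (d : Order.disp_t) (L : finTBLatticeType d) (l1 l2 : rel L) (S : {set L}),
     semimodular L -> planar_diagram l1 l2 -> full_slimming l1 S ->
     (gs_indecomposable [set: L] <-> gs_indecomposable S)) /\
  (* (ii) *)
  (forall (d1 d2 : Order.disp_t) (L1 : finTBLatticeType d1) (L2 : finTBLatticeType d2)
          (l1 l2 : rel L1) (m1 m2 : rel L2) (S1 : {set L1}) (S2 : {set L2}),
     semimodular L1 -> planar_diagram l1 l2 -> full_slimming l1 S1 ->
     semimodular L2 -> planar_diagram m1 m2 -> full_slimming m1 S2 ->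
     forall phi : L1 -> L2, lattice_iso phi ->
     exists pi : L1 -> L1,
       [/\ lattice_iso pi,
           (forall x, reducible x -> pi x = x),
           [set phi (pi x) | x in S1] = S2 &
           (forall x, x \in S1 -> nu l1 S1 x = nu m1 S2 (phi (pi x)))]) /\
  (* (iii) *)
  (forall (d : Order.disp_t) (L : finTBLatticeType d) (l1 l2 m1 m2 : rel L)
          (S T : {set L}),
     semimodular L -> planar_diagram l1 l2 -> planar_diagram m1 m2 ->
     full_slimming l1 S -> full_slimming m1 T ->
     exists f : L -> L,
       [set f x | x in S] = T /\
       (forall x y, x \in S -> y \in S -> (x <= y) = (f x <= f y))).
Proof.
split; [|split].
- move=> d L l1 l2 S Hsm Hpd Hf.
  rewrite (full_char Hpd Hsm Hf); exact: gs_char Hpd.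
- move=> d1 d2 L1 L2 l1 l2 m1 m2 S1 S2 Hsm1 Hpd Hf1 Hsm2 Hpm Hf2 phi Hiso.
  have [pi [pil pir pio piI]] := core Hpd (planar_pull Hiso Hpm).
  have [pbij _ _] := Hiso; have [pibij _ _] := pil.
  have psi_bij : bijective (phi \o pi) by apply: bij_comp.
  have psi_ord x y : (x <= y) = ((phi \o pi) x <= (phi \o pi) y).
    by rewrite /= -(iso_ord Hiso) -pio.
  have psiI x : Int m1 ((phi \o pi) x) = Int l1 x by rewrite /= -Int_pull ?piI.
  exists pi; split=> //.
    rewrite (full_char Hpd Hsm1 Hf1) (full_char Hpm Hsm2 Hf2).
    have := image_transfer (P1 := fun x => ~~ Int l1 x) (P2 := fun y => ~~ Int m1 y) psi_bij.
    by move=> -> // x; rewrite /= psiI.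
  move=> x _; rewrite (full_char Hpd Hsm1 Hf1) (full_char Hpm Hsm2 Hf2) (nu_char Hpd Hsm1) (nu_char Hpm Hsm2).
  apply: (card_transfer (f := phi \o pi)) => // e.
  by rewrite psiI -(iso_cov psi_bij psi_ord).
- move=> d L l1 l2 m1 m2 S T Hsm Hpd Hpm HS HT.
  have [pi [pil pir pio piI]] := core Hpd Hpm.
  have [pibij _ _] := pil.
  exists pi; split; last by move=> x y _ _; apply: pio.
  rewrite (full_char Hpd Hsm HS) (full_char Hpm Hsm HT).
  have := image_transfer (P1 := fun x => ~~ Int l1 x) (P2 := fun y => ~~ Int m1 y) pibij.
  by move=> -> // x; rewrite /= piI.
Qed.
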